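(* Let $\mathcal D$ be a monoidal category and $(C,\sigma)$ a cotensorable cocommutative lax central coalgebra of $\mathcal D$. Then the comonoidal adjunction $(V\colon{}^C_\sigma\mathrm{Comod}\to\mathcal D,\ R\colon\mathcal D\to{}^C_\sigma\mathrm{Comod})$ is a left Hopf adjunction, and its induced lax central coalgebra (as in: $F(\mathbb 1)$ with half-braiding $\mathbb H^r_{-,\mathbb 1}(\mathbb H^l_{\mathbb 1,-})^{-1}$) is $(C,\sigma)$. If moreover $\sigma$ is invertible, $(V,R)$ is a Hopf adjunction.
   Context: Monoidal categories are strict. A lax half-braiding for $C$ is a natural transformation $\sigma_X\colon C\otimes X\to X\otimes C$ with $\sigma_{Y\otimes Z}=(Y\otimes\sigma_Z)(\sigma_Y\otimes Z)$, $\sigma_{\mathbb 1}=\mathrm{id}$. A lax central coalgebra $(C,\sigma)$ is a coalgebra $(C,\Delta,\varepsilon)$ in the lax center of $\mathcal D$ (i.e. $\Delta,\varepsilon$ are morphisms of lax half-braidings, where $(C,\sigma)\otimes(C,\sigma)$ has half-braiding $(\sigma\otimes C)(C\otimes\sigma)$); it is cocommutative if $\sigma_C\Delta=\Delta$. It is cotensorable if for any left $C$-comodules $(M,\delta)$, $(N,\delta')$ in $\mathcal D$ the coreflexive pair $\sigma_M\delta\otimes N,\ M\otimes\delta'\colon M\otimes N\rightrightarrows M\otimes C\otimes N$ has an equalizer $M\square^\sigma_C N\to M\otimes N$, preserved by $C\otimes ?$. Then $M\square^\sigma_C N$ carries a unique left coaction making the equalizer map a comodule map into $(M\otimes N,\delta\otimes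 N)$, and ${}^C_\sigma\mathrm{Comod}$ denotes the monoidal category of left $C$-comodules with product $\square^\sigma_C$ and unit $(C,\Delta)$. $V$ is the forgetful functor and $R(X)=(C\otimes X,\Delta\otimes X)$ the cofree comodule functor, which is strong monoidal, making $(V,R)$ a comonoidal adjunction (with comonad $C\otimes ?$). For a comonoidal adjunction $(F,U)$ (unit $\eta$, counit $\varepsilon$, $F_2(X,Y)\colon F(X\otimes Y)\to FX\otimes FY$), the Hopf operators are $\mathbb H^l_{c,d}=(Fc\otimes\varepsilon_d)F_2(c,Ud)$ and $\mathbb H^r_{d,c}=(\varepsilon_d\otimes Fc)F_2(Ud,c)$; it is a left Hopf adjunction if $\mathbb H^l$ is invertible, a Hopf adjunction if both are. *)

(* Defs.v *)
Record MonData := {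
  ob : Type;
  hom : ob -> ob -> Type;
  idm : forall a, hom a a;
  comp : forall a b c, hom b c -> hom a b -> hom a c;
  tens : ob -> ob -> ob;
  tensm : forall a b c d, hom a b -> hom c d -> hom (tens a c) (tens b d);
  unit : ob }.

Arguments hom {m} _ _.
Arguments idm {m} a.
Arguments comp {m a b c} _ _.
Arguments tens {m} _ _.
Arguments tensm {m a b c d} _ _.
Arguments unit {m}.

Notation "g ∘ f" := (comp g f) (at level 40, left associativity).
Notation "a ⊗ b" := (tens a b) (at level 30, right associativity).
Notation "f ⊗m g" := (tensm f g) (at level 30, right associativity).

Definition cast {D : MonData} {a b : ob D} (e : a = b) : hom a b :=
  eq_rect a (hom a) (idm a) b e.

Record isStrictMon (D : MonData) : Prop := {
  comp_idl : forall (a b : ob D) (f : hom a b), idm b ∘ f = f;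
  comp_idr : forall (a b : ob D) (f : hom a b), f ∘ idm a = f;
  comp_assoc : forall (a b c d : ob D) (f : hom a b) (g : hom b c) (h : hom c d),
      h ∘ (g ∘ f) = (h ∘ g) ∘ f;
  tensm_id : forall a b : ob D, idm a ⊗m idm b = idm (a ⊗ b);
  tensm_comp : forall (a b c a' b' c' : ob D) (f : hom a b) (g : hom b c)
      (f' : hom a' b') (g' : hom b' c'),
      (g ∘ f) ⊗m (g' ∘ f') = (g ⊗m g') ∘ (f ⊗m f');
  tens_assoc : forall a b c : ob D, (a ⊗ b) ⊗ c = a ⊗ (b ⊗ c);
  tens_unitl : forall a : ob D, unit ⊗ a = a;
  tens_unitr : forall a : ob D, a ⊗ unit = a;
  tensm_assoc : forall (a b c a' b' c' : ob D) (f : hom a a') (g : hom b b')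
      (h : hom c c'),
      cast (tens_assoc a' b' c') ∘ ((f ⊗m g) ⊗m h)
      = (f ⊗m (g ⊗m h)) ∘ cast (tens_assoc a b c);
  tensm_unitl : forall (a b : ob D) (f : hom a b),
      cast (tens_unitl b) ∘ (idm unit ⊗m f) = f ∘ cast (tens_unitl a);
  tensm_unitr : forall (a b : ob D) (f : hom a b),
      cast (tens_unitr b) ∘ (f ⊗m idm unit) = f ∘ cast (tens_unitr a) }.

Section Defs.
Context {D : MonData} (HD : isStrictMon D).

Definition is_iso {a b : ob D} (f : hom a b) : Prop :=
  exists g : hom b a, g ∘ f = idm a /\ f ∘ g = idm b.

Definition is_equalizer {E A B : ob D} (f g : hom A B) (e : hom E A) : Prop :=
  f ∘ e = g ∘ e /\
  forall (Z : ob D) (h : hom Z A), f ∘ h = g ∘ h ->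
    exists u : hom Z E, e ∘ u = h /\ forall u' : hom Z E, e ∘ u' = h -> u' = u.

Let A := tens_assoc D HD.
Let UL := tens_unitl D HD.
Let UR := tens_unitr D HD.

Variable C : ob D.

Definition is_lax_half_braiding (sigma : forall X : ob D, hom (C ⊗ X) (X ⊗ C)) : Prop :=
  (forall (X Y : ob D) (f : hom X Y), (f ⊗m idm C) ∘ sigma X = sigma Y ∘ (idm C ⊗m f)) /\
  (forall Y Z : ob D,
     sigma (Y ⊗ Z) = cast (eq_sym (A Y Z C)) ∘ (idm Y ⊗m sigma Z) ∘ cast (A Y C Z)
                     ∘ (sigma Y ⊗m idm Z) ∘ cast (eq_sym (A C Y Z))) /\
  sigma unit = cast (eq_trans (UR C) (eq_sym (UL C))).

Definition is_coalgebra (Delta : hom C (C ⊗ C)) (eps : hom C unit) : Prop :=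
  cast (A C C C) ∘ (Delta ⊗m idm C) ∘ Delta = (idm C ⊗m Delta) ∘ Delta /\
  cast (UL C) ∘ (eps ⊗m idm C) ∘ Delta = idm C /\
  cast (UR C) ∘ (idm C ⊗m eps) ∘ Delta = idm C.

(* coalgebra in the lax center: Delta and eps are morphisms of lax half-braidings,
   (C,sigma)(x)(C,sigma) carrying (sigma (x) C)(C (x) sigma), the unit carrying id. *)
Definition is_lax_central_coalgebra (Delta : hom C (C ⊗ C)) (eps : hom C unit)
    (sigma : forall X : ob D, hom (C ⊗ X) (X ⊗ C)) : Prop :=
  is_lax_half_braiding sigma /\ is_coalgebra Delta eps /\
  (forall X : ob D,
     cast (A X C C) ∘ (sigma X ⊗m idm C) ∘ cast (eq_sym (A C X C)) ∘ (idm C ⊗m sigma X)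
       ∘ cast (A C C X) ∘ (Delta ⊗m idm X)
     = (idm X ⊗m Delta) ∘ sigma X) /\
  (forall X : ob D,
     (idm X ⊗m eps) ∘ sigma X = cast (eq_trans (UL X) (eq_sym (UR X))) ∘ (eps ⊗m idm X)).

Definition is_cocommutative (Delta : hom C (C ⊗ C))
    (sigma : forall X : ob D, hom (C ⊗ X) (X ⊗ C)) : Prop :=
  sigma C ∘ Delta = Delta.

Definition is_comodule (Delta : hom C (C ⊗ C)) (eps : hom C unit)
    (M : ob D) (delta : hom M (C ⊗ M)) : Prop :=
  cast (A C C M) ∘ (Delta ⊗m idm M) ∘ delta = (idm C ⊗m delta) ∘ delta /\
  cast (UL M) ∘ (eps ⊗m idm M) ∘ delta = idm M.

Definition cot1 (sigma : forall X : ob D, hom (C ⊗ X) (X ⊗ C))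
    (M : ob D) (delta : hom M (C ⊗ M)) (N : ob D) : hom (M ⊗ N) (M ⊗ (C ⊗ N)) :=
  cast (A M C N) ∘ ((sigma M ∘ delta) ⊗m idm N).

Definition cot2 (M N : ob D) (delta' : hom N (C ⊗ N)) : hom (M ⊗ N) (M ⊗ (C ⊗ N)) :=
  idm M ⊗m delta'.

Definition cotensorable (Delta : hom C (C ⊗ C)) (eps : hom C unit)
    (sigma : forall X : ob D, hom (C ⊗ X) (X ⊗ C)) : Prop :=
  forall (M : ob D) (delta : hom M (C ⊗ M)) (N : ob D) (delta' : hom N (C ⊗ N)),
    is_comodule Delta eps M delta -> is_comodule Delta eps N delta' ->
    exists (E : ob D) (e : hom E (M ⊗ N)),
      is_equalizer (cot1 sigma M delta N) (cot2 M N delta') e /\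
      is_equalizer (idm C ⊗m cot1 sigma M delta N) (idm C ⊗m cot2 M N delta')
                   (idm C ⊗m e).

(* coaction of the cofree comodule R X = (C (x) X, Delta (x) X) *)
Definition cofree_coaction (Delta : hom C (C ⊗ C)) (X : ob D) : hom (C ⊗ X) (C ⊗ (C ⊗ X)) :=
  cast (A C C X) ∘ (Delta ⊗m idm X).

Definition adj_counit (eps : hom C unit) (X : ob D) : hom (C ⊗ X) X :=
  cast (UL X) ∘ (eps ⊗m idm X).

(* Hopf operators of (V,R); e is the structure map V_2(M, R X) (resp. V_2(R X, M)),
   i.e. the equalizer inclusion V(M □ R X) -> M (x) (C (x) X). *)
Definition hopfL (eps : hom C unit) {M X E : ob D} (e : hom E (M ⊗ (C ⊗ X))) : hom E (M ⊗ X) :=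
  (idm M ⊗m adj_counit eps X) ∘ e.

Definition hopfR (eps : hom C unit) {X M E : ob D} (e : hom E ((C ⊗ X) ⊗ M)) : hom E (X ⊗ M) :=
  (adj_counit eps X ⊗m idm M) ∘ e.

Definition VR_left_hopf (Delta : hom C (C ⊗ C)) (eps : hom C unit)
    (sigma : forall X : ob D, hom (C ⊗ X) (X ⊗ C)) : Prop :=
  forall (M : ob D) (delta : hom M (C ⊗ M)), is_comodule Delta eps M delta ->
  forall (X E : ob D) (e : hom E (M ⊗ (C ⊗ X))),
    is_equalizer (cot1 sigma M delta (C ⊗ X)) (cot2 M (C ⊗ X) (cofree_coaction Delta X)) e ->
    is_iso (hopfL eps e).

Definition VR_right_hopf (Delta : hom C (C ⊗ C)) (eps : hom C unit)
    (sigma : forall X : ob D, hom (C ⊗ X) (X ⊗ C)) : Prop :=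
  forall (M : ob D) (delta : hom M (C ⊗ M)), is_comodule Delta eps M delta ->
  forall (X E : ob D) (e : hom E ((C ⊗ X) ⊗ M)),
    is_equalizer (cot1 sigma (C ⊗ X) (cofree_coaction Delta X) M) (cot2 (C ⊗ X) M delta) e ->
    is_iso (hopfR eps e).

Definition VR_hopf Delta eps sigma : Prop :=
  VR_left_hopf Delta eps sigma /\ VR_right_hopf Delta eps sigma.

(* Induced lax central coalgebra on F(1) = V(C,Delta) = C.
   Comultiplication: V_2(1,1) o V(l_1)^{-1}, counit V_0 = eps (by definition of
   the comonoidal structure of V). Half-braiding:
   H^r_{X,1} o V(r_{RX})^{-1} o V(l_{RX}) o (H^l_{1,X})^{-1},
   where l, r are the unitors of the comodule category, V l = (eps (x) N) o e,
   V r = (M (x) eps) o e. *)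
Definition induced_comultiplication_is (Delta : hom C (C ⊗ C)) (eps : hom C unit)
    (sigma : forall X : ob D, hom (C ⊗ X) (X ⊗ C)) : Prop :=
  forall (E0 : ob D) (e0 : hom E0 (C ⊗ C)),
    is_equalizer (cot1 sigma C Delta C) (cot2 C C Delta) e0 ->
    exists k : hom C E0,
      k ∘ (cast (UL C) ∘ (eps ⊗m idm C) ∘ e0) = idm E0 /\
      (cast (UL C) ∘ (eps ⊗m idm C) ∘ e0) ∘ k = idm C /\
      e0 ∘ k = Delta.

Definition induced_half_braiding_is (Delta : hom C (C ⊗ C)) (eps : hom C unit)
    (sigma : forall X : ob D, hom (C ⊗ X) (X ⊗ C)) : Prop :=
  forall (X E1 E2 : ob D) (e1 : hom E1 (C ⊗ (C ⊗ X))) (e2 : hom E2 ((C ⊗ X) ⊗ C)),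
    is_equalizer (cot1 sigma C Delta (C ⊗ X)) (cot2 C (C ⊗ X) (cofree_coaction Delta X)) e1 ->
    is_equalizer (cot1 sigma (C ⊗ X) (cofree_coaction Delta X) C) (cot2 (C ⊗ X) C Delta) e2 ->
    let Hl := hopfL eps e1 in
    let Hr := hopfR eps e2 in
    let Vl := cast (UL (C ⊗ X)) ∘ (eps ⊗m idm (C ⊗ X)) ∘ e1 in
    let Vr := cast (UR (C ⊗ X)) ∘ (idm (C ⊗ X) ⊗m eps) ∘ e2 in
    exists (g : hom (C ⊗ X) E1) (h : hom (C ⊗ X) E2),
      g ∘ Hl = idm E1 /\ Hl ∘ g = idm (C ⊗ X) /\
      h ∘ Vr = idm E2 /\ Vr ∘ h = idm (C ⊗ X) /\
      Hr ∘ h ∘ Vl ∘ g = sigma X.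
End Defs.

(* Main.v *)
Require Import Defs.
From Stdlib Require Import ProofIrrelevance ClassicalEpsilon Eqdep.

Section Infra.
Context {D : MonData} (HD : isStrictMon D).

Definition Arr := {p : ob D * ob D & hom (fst p) (snd p)}.
Definition pack {a b : ob D} (f : hom a b) : Arr :=
  existT (fun p => hom (fst p) (snd p)) (a, b) f.
Definition dom (F : Arr) : ob D := fst (projT1 F).
Definition cod (F : Arr) : ob D := snd (projT1 F).
Definition mor (F : Arr) : hom (dom F) (cod F) := projT2 F.
Definition Aid (a : ob D) : Arr := pack (idm a).
Definition Atens (F G : Arr) : Arr := pack (mor F ⊗m mor G).
Definition Acomp (G F : Arr) : Arr :=
  match excluded_middle_informative (cod F = dom G) with
  | left e => pack (mor G ∘ cast e ∘ mor F)
  | right _ => F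
  end.

Lemma pack_inj {a b} (f g : hom a b) : pack f = pack g -> f = g.
Proof. intro H. exact (Eqdep.EqdepTheory.inj_pair2 _ _ _ _ _ H). Qed.

Lemma pack_cast {a b} (e : a = b) : pack (cast e) = Aid a.
Proof. destruct e. reflexivity. Qed.

Lemma pack_id a : pack (idm a) = Aid a.
Proof. reflexivity. Qed.

Lemma pack_tens {a b c d} (f : hom a b) (g : hom c d) : pack (f ⊗m g) = Atens (pack f) (pack g).
Proof. reflexivity. Qed.

Lemma pack_comp {a b c} (g : hom b c) (f : hom a b) : pack (g ∘ f) = Acomp (pack g) (pack f).
Proof.
  unfold Acomp. destruct (excluded_middle_informative _) as [e|n].
  - cbn in e. rewrite (proof_irrelevance _ e eq_refl). cbn.
    rewrite (comp_idr D HD). reflexivity.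
  - exfalso. apply n. reflexivity.
Qed.

Lemma pack_eq {a b a' b'} (f : hom a b) (g : hom a' b') (e1 : a = a') (e2 : b = b') :
  cast e2 ∘ f = g ∘ cast e1 -> pack f = pack g.
Proof.
  destruct e1, e2. cbn. rewrite (comp_idl D HD), (comp_idr D HD). intros ->. reflexivity.
Qed.

Lemma Arr_eta (F : Arr) : F = pack (mor F).
Proof. destruct F as [[x y] f]. reflexivity. Qed.

Lemma Aid_eq a b : a = b -> Aid a = Aid b.
Proof. intros ->. reflexivity. Qed.

Lemma Atens_assoc F G H : Atens (Atens F G) H = Atens F (Atens G H).
Proof.
  unfold Atens. cbn. eapply pack_eq. apply (tensm_assoc D HD).
Qed.

Lemma Atens_unitl F : Atens (Aid unit) F = F.
Proof.
  rewrite (Arr_eta F) at 2. unfold Atens, Aid. cbn. eapply pack_eq. apply (tensm_unitl D HD).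
Qed.

Lemma Atens_unitr F : Atens F (Aid unit) = F.
Proof.
  rewrite (Arr_eta F) at 2. unfold Atens, Aid. cbn. eapply pack_eq. apply (tensm_unitr D HD).
Qed.

Lemma Atens_id a b : Atens (Aid a) (Aid b) = Aid (a ⊗ b).
Proof. unfold Atens, Aid. cbn. rewrite (tensm_id D HD). reflexivity. Qed.

Lemma dom_Acomp G F : dom (Acomp G F) = dom F.
Proof. unfold Acomp. destruct (excluded_middle_informative _); reflexivity. Qed.

Lemma cod_Acomp G F : cod F = dom G -> cod (Acomp G F) = cod G.
Proof. unfold Acomp. destruct (excluded_middle_informative _); [reflexivity|contradiction]. Qed.

Lemma dom_Atens F G : dom (Atens F G) = dom F ⊗ dom G. Proof. reflexivity. Qed.
Lemma cod_Atens F G : cod (Atens F G) = cod F ⊗ cod G. Proof. reflexivity. Qed.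
Lemma dom_Aid a : dom (Aid a) = a. Proof. reflexivity. Qed.
Lemma cod_Aid a : cod (Aid a) = a. Proof. reflexivity. Qed.
Lemma dom_pack {a b} (f : hom a b) : dom (pack f) = a. Proof. reflexivity. Qed.
Lemma cod_pack {a b} (f : hom a b) : cod (pack f) = b. Proof. reflexivity. Qed.

Lemma Acomp_idl a F : cod F = a -> Acomp (Aid a) F = F.
Proof.
  destruct F as [[x y] f]. cbn in *. intros <-. unfold Aid.
  change (existT _ (x, y) f) with (pack (a:=x) (b:=y) f).
  rewrite <- (pack_comp (idm y) f), (comp_idl D HD). reflexivity.
Qed.

Lemma Acomp_idr a F : dom F = a -> Acomp F (Aid a) = F.
Proof.
  destruct F as [[x y] f]. cbn in *. intros <-. unfold Aid.
  change (existT _ (x, y) f) with (pack (a:=x) (b:=y) f).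
  rewrite <- (pack_comp f (idm x)), (comp_idr D HD). reflexivity.
Qed.

Lemma Acomp_assoc F G H : cod F = dom G -> cod G = dom H ->
  Acomp H (Acomp G F) = Acomp (Acomp H G) F.
Proof.
  destruct F as [[x y] f], G as [[y' z] g], H as [[z' w] h]. cbn.
  intros <- <-. cbn in *.
  change (existT _ (x, y) f) with (pack (a:=x) (b:=y) f).
  change (existT _ (y, z) g) with (pack (a:=y) (b:=z) g).
  change (existT _ (z, w) h) with (pack (a:=z) (b:=w) h).
  rewrite <- !pack_comp, (comp_assoc D HD). reflexivity.
Qed.

Lemma Ainterchange F G F' G' : cod F = dom G -> cod F' = dom G' ->
  Atens (Acomp G F) (Acomp G' F') = Acomp (Atens G G') (Atens F F').
Proof.
  destruct F as [[x y] f], G as [[y' z] g], F' as [[x2 y2] f'], G' as [[y2' z2] g']. cbn.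
  intros <- <-. cbn in *.
  change (existT _ (x, y) f) with (pack (a:=x) (b:=y) f).
  change (existT _ (y, z) g) with (pack (a:=y) (b:=z) g).
  change (existT _ (x2, y2) f') with (pack (a:=x2) (b:=y2) f').
  change (existT _ (y2, z2) g') with (pack (a:=y2) (b:=z2) g').
  rewrite <- !pack_comp, <- !pack_tens, <- pack_comp, (tensm_comp D HD). reflexivity.
Qed.

End Infra.


Section W.
Context {D : MonData} (HD : isStrictMon D).

Ltac obj :=
  repeat (cbn [dom cod Atens Aid pack mor projT1 fst snd];
          first [rewrite dom_Acomp | rewrite cod_Acomp by obj]);
  cbn [dom cod Atens Aid pack mor projT1 fst snd];
  repeat (first [rewrite (tens_assoc _ HD) | rewrite (tens_unitl _ HD) | rewrite (tens_unitr _ HD)]);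
  reflexivity.

Ltac to_arr := repeat (first [rewrite (pack_comp HD) | rewrite pack_tens | rewrite (pack_cast) | rewrite pack_id]).

Ltac clean := repeat (first [rewrite (Atens_id HD) | rewrite (Acomp_idl HD) by obj
     | rewrite (Acomp_idr HD) by obj | rewrite (Atens_unitl HD) | rewrite (Atens_unitr HD)]).

Ltac rnest := repeat (rewrite <- (Acomp_assoc HD) by obj).

Ltac simp := to_arr; clean; rnest.

Context (C : ob D) (Delta : hom C (C ⊗ C)) (eps : hom C unit)
    (sigma : forall X : ob D, hom (C ⊗ X) (X ⊗ C)).
Context (Hlcc : is_lax_central_coalgebra HD C Delta eps sigma)
        (Hcoc0 : is_cocommutative C Delta sigma).

Notation S X := (pack (sigma X)).
Notation Dl := (pack Delta).
Notation Ep := (pack eps).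
Notation I := Aid.

Lemma Hnat X Y (f : hom X Y) : Acomp (Atens (pack f) (I C)) (S X) = Acomp (S Y) (Atens (I C) (pack f)).
Proof. destruct Hlcc as [[H _] _]. generalize (f_equal pack (H X Y f)). simp. auto. Qed.

Lemma Htens Y Z : S (Y ⊗ Z) = Acomp (Atens (I Y) (S Z)) (Atens (S Y) (I Z)).
Proof. destruct Hlcc as [[_ [H _]] _]. rewrite H. simp. reflexivity. Qed.


Lemma Hunit : S unit = I C.
Proof. destruct Hlcc as [[_ [_ H]] _]. rewrite H, pack_cast. apply Aid_eq. obj. Qed.

Lemma Hcoass : Acomp (Atens Dl (I C)) Dl = Acomp (Atens (I C) Dl) Dl.
Proof. destruct Hlcc as [_ [[H _] _]]. generalize (f_equal pack H). simp. auto. Qed.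
Lemma Hcul : Acomp (Atens Ep (I C)) Dl = I C.
Proof. destruct Hlcc as [_ [[_ [H _]] _]]. generalize (f_equal pack H). simp. auto. Qed.
Lemma Hcur : Acomp (Atens (I C) Ep) Dl = I C.
Proof. destruct Hlcc as [_ [[_ [_ H]] _]]. generalize (f_equal pack H). simp. auto. Qed.
Lemma HcD X : Acomp (Atens (S X) (I C)) (Acomp (Atens (I C) (S X)) (Atens Dl (I X)))
   = Acomp (Atens (I X) Dl) (S X).
Proof. destruct Hlcc as [_ [_ [H _]]]. generalize (f_equal pack (H X)). simp. auto. Qed.
Lemma HcE X : Acomp (Atens (I X) Ep) (S X) = Atens Ep (I X).
Proof. destruct Hlcc as [_ [_ [_ H]]]. generalize (f_equal pack (H X)). simp. auto. Qed.
Lemma Hcoc : Acomp (S C) Dl = Dl.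
Proof. generalize (f_equal pack Hcoc0). simp. auto. Qed.

Lemma Hcom1 M (d : hom M (C ⊗ M)) : is_comodule HD C Delta eps M d ->
  Acomp (Atens Dl (I M)) (pack d) = Acomp (Atens (I C) (pack d)) (pack d).
Proof. intros [H _]. generalize (f_equal pack H). simp. auto. Qed.
Lemma Hcom2 M (d : hom M (C ⊗ M)) : is_comodule HD C Delta eps M d ->
  Acomp (Atens Ep (I M)) (pack d) = I M.
Proof. intros [_ H]. generalize (f_equal pack H). simp. auto. Qed.


Lemma tens_comp_l (F G : Arr) (c : ob D) : cod F = dom G ->
  Atens (Acomp G F) (I c) = Acomp (Atens G (I c)) (Atens F (I c)).
Proof. intro H. rewrite <- (Ainterchange HD) by (try assumption; reflexivity).
  rewrite (Acomp_idl HD) by reflexivity. reflexivity. Qed.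
Lemma tens_comp_r (F G : Arr) (c : ob D) : cod F = dom G ->
  Atens (I c) (Acomp G F) = Acomp (Atens (I c) G) (Atens (I c) F).
Proof. intro H. rewrite <- (Ainterchange HD) by (try assumption; reflexivity).
  rewrite (Acomp_idl HD) by reflexivity. reflexivity. Qed.

Lemma keyL M (d : hom M (C ⊗ M)) : is_comodule HD C Delta eps M d ->
  Acomp (Atens (Acomp (S M) (pack d)) (I C)) (Acomp (S M) (pack d))
  = Acomp (Atens (I M) Dl) (Acomp (S M) (pack d)).
Proof.
  intro Hc.
  rewrite tens_comp_l by obj. rnest.
  rewrite (Acomp_assoc HD (pack d) (S M) (Atens (pack d) (I C))) by obj.
  rewrite Hnat, Htens. rnest.
  rewrite <- (Hcom1 _ _ Hc).
  rewrite (Acomp_assoc HD _ (Atens Dl (I M)) (Atens (S C) (I M))) by obj.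
  rewrite <- tens_comp_l by obj. rewrite Hcoc.
  rewrite (Acomp_assoc HD (pack d) (S M) (Atens (I M) Dl)) by obj. rewrite <- HcD. rnest. reflexivity.
Qed.


Lemma keyE M (d : hom M (C ⊗ M)) : is_comodule HD C Delta eps M d ->
  Acomp (Atens (I M) Ep) (Acomp (S M) (pack d)) = I M.
Proof.
  intro Hc. rewrite (Acomp_assoc HD) by obj. rewrite HcE. apply (Hcom2 _ _ Hc).
Qed.

Lemma left_hopf_strong M (d : hom M (C ⊗ M)) : is_comodule HD C Delta eps M d ->
  forall (X E : ob D) (e : hom E (M ⊗ (C ⊗ X))),
    is_equalizer (cot1 HD C sigma M d (C ⊗ X)) (cot2 C M (C ⊗ X) (cofree_coaction HD C Delta X)) e ->
    exists u, (e ∘ u = cast (tens_assoc D HD M C X) ∘ ((sigma M ∘ d) ⊗m idm X)) /\ (u ∘ hopfL HD C eps e = idm E) /\ (hopfL HD C eps e ∘ u = idm (M ⊗ X)).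
Proof.
  intros Hc X E e [Heq1 Heq2].
  set (g0 := cast (tens_assoc D HD M C X) ∘ ((sigma M ∘ d) ⊗m idm X)).
  assert (Hg0 : cot1 HD C sigma M d (C ⊗ X) ∘ g0 = cot2 C M (C ⊗ X) (cofree_coaction HD C Delta X) ∘ g0).
  { apply pack_inj. unfold g0, cot1, cot2, cofree_coaction. simp.
    rewrite <- (Atens_id HD C X), <- (Atens_assoc HD (Acomp (S M) (pack d)) (I C) (I X)).
    rewrite <- tens_comp_l by obj. rewrite (keyL _ _ Hc), tens_comp_l by obj.
    rewrite (Atens_assoc HD). reflexivity. }
  destruct (Heq2 _ g0 Hg0) as [u [Hu _]].
  exists u. split; [exact Hu|]. split.
  - destruct (Heq2 _ e Heq1) as [u0 [_ Hu0]].
    rewrite (Hu0 (idm E)) by apply (comp_idr D HD).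
    apply Hu0. rewrite (comp_assoc D HD), Hu.
    apply pack_inj. unfold g0, hopfL, adj_counit. simp.
    assert (H1 := f_equal pack Heq1). revert H1. unfold cot1, cot2, cofree_coaction. simp. intro H1.
    rewrite (Acomp_assoc HD) by obj. rewrite <- (Ainterchange HD) by obj. clean.
    replace (Atens (Acomp (S M) (pack d)) (Atens Ep (I X))) with
      (Acomp (Atens (I (M ⊗ C)) (Atens Ep (I X))) (Atens (Acomp (S M) (pack d)) (I (C ⊗ X)))).
    2:{ rewrite <- (Ainterchange HD) by obj. clean. reflexivity. }
    rnest. rewrite H1. rewrite (Acomp_assoc HD) by obj.
    rewrite <- (Atens_id HD M C), (Atens_assoc HD (I M) (I C)).
    rewrite <- (Ainterchange HD) by obj. clean.
    rewrite <- (Atens_assoc HD (I C) Ep (I X)).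
    rewrite <- tens_comp_l by obj. rewrite Hcur. clean. reflexivity.
  - unfold hopfL. rewrite <- (comp_assoc D HD), Hu.
    apply pack_inj. unfold g0, adj_counit. simp.
    rewrite <- (Atens_assoc HD (I M) Ep (I X)), <- tens_comp_l by obj.
    rewrite (keyE _ _ Hc). clean. reflexivity.
Qed.

Lemma left_hopf : VR_left_hopf HD C Delta eps sigma.
Proof.
  intros M d Hc X E e He. destruct (left_hopf_strong M d Hc X E e He) as [u [_ [H1 H2]]].
  exists u. split; assumption.
Qed.

Lemma tens_splitA (F G : @Arr D) : Atens F G = Acomp (Atens F (I (cod G))) (Atens (I (dom F)) G).
Proof. rewrite <- (Ainterchange HD) by reflexivity.
  rewrite (Acomp_idl HD), (Acomp_idr HD) by reflexivity. reflexivity. Qed.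
Lemma tens_splitB (F G : @Arr D) : Atens F G = Acomp (Atens (I (cod F)) G) (Atens F (I (dom G))).
Proof. rewrite <- (Ainterchange HD) by reflexivity.
  rewrite (Acomp_idl HD), (Acomp_idr HD) by reflexivity. reflexivity. Qed.

Lemma comult : induced_comultiplication_is HD C Delta eps sigma.
Proof.
  intros E0 e0 [Heq1 Heq2].
  assert (HD1 : cot1 HD C sigma C Delta C ∘ Delta = cot2 C C C Delta ∘ Delta).
  { apply pack_inj. unfold cot1, cot2. simp. rewrite Hcoc. apply Hcoass. }
  destruct (Heq2 _ _ HD1) as [k [Hk _]].
  assert (H1 := f_equal pack Heq1). revert H1. unfold cot1, cot2. simp. rewrite Hcoc. intro H1.
  exists k. split; [|split].
  - destruct (Heq2 _ e0 Heq1) as [u0 [_ Hu0]].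
    rewrite (Hu0 (idm E0)) by apply (comp_idr D HD).
    apply Hu0. rewrite !(comp_assoc D HD), Hk.
    apply pack_inj. simp.
    rewrite (Acomp_assoc HD _ _ Dl) by obj.
    replace (Acomp Dl (Atens Ep (I C))) with (Atens Ep Dl).
    2:{ rewrite (tens_splitB Ep Dl). cbn [cod dom pack projT1 fst snd]. rewrite (Atens_unitl HD). reflexivity. }
    rewrite (tens_splitA Ep Dl). cbn [cod dom pack projT1 fst snd]. rnest.
    rewrite <- H1. rewrite (Acomp_assoc HD) by obj.
    rewrite <- (Atens_id HD C C), <- (Atens_assoc HD).
    rewrite <- tens_comp_l by obj. rewrite Hcul. clean. reflexivity.
  - rewrite <- (comp_assoc D HD), Hk. apply pack_inj. simp. apply Hcul.
  - exact Hk.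
Qed.

Lemma cofree_comod X : is_comodule HD C Delta eps (C ⊗ X) (cofree_coaction HD C Delta X).
Proof.
  split; apply pack_inj; unfold cofree_coaction; simp.
  - rewrite <- (Atens_id HD C X), <- (Atens_assoc HD Dl (I C) (I X)).
    rewrite <- tens_comp_l by obj. rewrite Hcoass, tens_comp_l by obj.
    rewrite (Atens_assoc HD). reflexivity.
  - rewrite <- (Atens_id HD C X), <- (Atens_assoc HD Ep (I C) (I X)).
    rewrite <- tens_comp_l by obj. rewrite Hcul. clean. reflexivity.
Qed.

Lemma comod_C : is_comodule HD C Delta eps C Delta.
Proof. destruct Hlcc as [_ [[H1 [H2 _]] _]]. split; assumption. Qed.

Lemma half_braiding : induced_half_braiding_is HD C Delta eps sigma.
Proof.
  intros X E1 E2 e1 e2 He1 [Heq1 Heq2]. cbv zeta.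
  destruct (left_hopf_strong C Delta comod_C X E1 e1 He1) as [g [Hg [Hg1 Hg2]]].
  assert (Hh0 : cot1 HD C sigma (C ⊗ X) (cofree_coaction HD C Delta X) C ∘ (sigma (C ⊗ X) ∘ cofree_coaction HD C Delta X) = cot2 C (C ⊗ X) C Delta ∘ (sigma (C ⊗ X) ∘ cofree_coaction HD C Delta X)).
  { apply pack_inj. unfold cot1, cot2. simp. apply (keyL _ _ (cofree_comod X)). }
  destruct (Heq2 _ _ Hh0) as [h [Hh _]].
  assert (H2 := f_equal pack Heq1). revert H2. unfold cot1, cot2. simp. intro H2.
  assert (HVg : cast (tens_unitl D HD (C ⊗ X)) ∘ (eps ⊗m idm (C ⊗ X)) ∘ e1 ∘ g = idm (C ⊗ X)).
  { rewrite <- (comp_assoc D HD), Hg. apply pack_inj. simp. rewrite Hcoc.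
    rewrite <- (Atens_id HD C X), <- (Atens_assoc HD Ep (I C) (I X)).
    rewrite <- tens_comp_l by obj. rewrite Hcul. clean. reflexivity. }
  exists g, h. split; [exact Hg1|]. split; [exact Hg2|]. split; [|split].
  - destruct (Heq2 _ e2 Heq1) as [u0 [_ Hu0]].
    rewrite (Hu0 (idm E2)) by apply (comp_idr D HD).
    apply Hu0. rewrite !(comp_assoc D HD), Hh.
    apply pack_inj. simp.
    rewrite (Acomp_assoc HD (pack e2) (Atens (I (C ⊗ X)) Ep)) by obj.
    rewrite (Acomp_assoc HD _ _ (S (C ⊗ X))) by obj.
    rewrite (Acomp_assoc HD (Atens (I (C ⊗ X)) Ep)) by obj.
    replace (Acomp (Acomp (S (C ⊗ X)) (pack (cofree_coaction HD C Delta X))) (Atens (I (C ⊗ X)) Ep))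
      with (Atens (Acomp (S (C ⊗ X)) (pack (cofree_coaction HD C Delta X))) Ep).
    2:{ rewrite tens_splitA. rewrite dom_Acomp, dom_pack, cod_pack, (Atens_unitr HD). reflexivity. }
    rewrite tens_splitB. rewrite cod_Acomp by obj. rewrite cod_pack, dom_pack.
    rnest. rewrite H2.
    rewrite (Acomp_assoc HD) by obj.
    rewrite <- (Atens_id HD (C ⊗ X) C), (Atens_assoc HD (I (C ⊗ X)) (I C) Ep).
    rewrite <- (Ainterchange HD) by obj. clean. rewrite Hcur. clean. reflexivity.
  - rewrite <- (comp_assoc D HD), Hh. apply pack_inj. simp.
    apply (keyE _ _ (cofree_comod X)).
  - rewrite <- (comp_assoc D HD), HVg, (comp_idr D HD).
    unfold hopfR, adj_counit. rewrite <- (comp_assoc D HD), Hh.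
    apply pack_inj. unfold cofree_coaction. simp.
    rewrite Htens. rnest.
    rewrite (Atens_assoc HD Ep), (Atens_id HD X C).
    rewrite (Acomp_assoc HD _ (Atens (I C) (S X)) (Atens Ep (I (X ⊗ C)))) by obj.
    rewrite <- (Ainterchange HD) by obj. clean.
    rewrite (tens_splitB Ep (S X)), cod_pack, dom_pack, (Atens_unitl HD). rnest.
    rewrite <- tens_comp_l by obj. rewrite Hcoc.
    rewrite <- (Atens_id HD C X), <- (Atens_assoc HD Ep (I C) (I X)).
    rewrite <- tens_comp_l by obj. rewrite Hcul. clean. reflexivity.
Qed.

Lemma HB X : Acomp (Atens Ep (I (X ⊗ C))) (Acomp (S (C ⊗ X)) (Atens Dl (I X))) = S X.
Proof.
    rewrite Htens. rnest.
    rewrite (Acomp_assoc HD _ (Atens (I C) (S X)) (Atens Ep (I (X ⊗ C)))) by obj.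
    rewrite <- (Ainterchange HD) by obj. clean.
    rewrite (tens_splitB Ep (S X)), cod_pack, dom_pack, (Atens_unitl HD). rnest.
    rewrite <- tens_comp_l by obj. rewrite Hcoc.
    rewrite <- (Atens_id HD C X), <- (Atens_assoc HD Ep (I C) (I X)).
    rewrite <- tens_comp_l by obj. rewrite Hcul. clean. reflexivity.
Qed.

Lemma right_hopf : (forall X : ob D, is_iso (sigma X)) -> VR_right_hopf HD C Delta eps sigma.
Proof.
  intros Hinv M d Hc X E e [Heq1 Heq2].
  destruct (Hinv X) as [t [Ht1 Ht2]].
  assert (HT1 : Acomp (pack t) (S X) = I (C ⊗ X)) by (rewrite <- (pack_comp HD), Ht1; reflexivity).
  assert (HT2 : Acomp (S X) (pack t) = I (X ⊗ C)) by (rewrite <- (pack_comp HD), Ht2; reflexivity).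
  assert (HTE : Acomp (Atens Ep (I X)) (pack t) = Atens (I X) Ep).
  { rewrite <- HcE. rewrite <- (Acomp_assoc HD) by obj. rewrite HT2. clean. reflexivity. }
  assert (HTD : Acomp (Acomp (S (C ⊗ X)) (Atens Dl (I X))) (pack t)
               = Acomp (Atens (pack t) (I C)) (Atens (I X) Dl)).
  { rewrite <- (Acomp_idr HD (X ⊗ C) (Acomp (Atens (pack t) (I C)) (Atens (I X) Dl))) by obj.
    rewrite <- HT2. rnest. rewrite (Acomp_assoc HD (pack t) (S X) (Atens (I X) Dl)) by obj.
    rewrite <- HcD. rnest.
    rewrite (Acomp_assoc HD _ (Atens (S X) (I C)) (Atens (pack t) (I C))) by obj.
    rewrite <- tens_comp_l by obj. rewrite HT1. clean.
    rewrite Htens. rnest. rewrite (Acomp_assoc HD (pack t) (Atens Dl (I X)) (Atens (S C) (I X))) by obj. rewrite <- tens_comp_l by obj. rewrite Hcoc. reflexivity. }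
  set (r0 := (t ⊗m idm M) ∘ cast (eq_sym (tens_assoc D HD X C M)) ∘ (idm X ⊗m d)).
  assert (Hr0 : cot1 HD C sigma (C ⊗ X) (cofree_coaction HD C Delta X) M ∘ r0 = cot2 C (C ⊗ X) M d ∘ r0).
  { apply pack_inj. unfold r0, cot1, cot2, cofree_coaction. simp.
    rewrite (Acomp_assoc HD _ (Atens (pack t) (I M))) by obj.
    rewrite <- tens_comp_l by obj. rewrite HTD, tens_comp_l by obj. rnest.
    rewrite (Atens_assoc HD (I X) Dl (I M)), <- tens_comp_r by obj. rewrite (Hcom1 _ _ Hc).
    rewrite (Acomp_assoc HD _ (Atens (pack t) (I M)) (Atens (I (C ⊗ X)) (pack d))) by obj.
    rewrite <- (Ainterchange HD (pack t) (I (C ⊗ X)) (I M) (pack d)) by obj. clean.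
    rewrite (tens_splitA (pack t) (pack d)), cod_pack, dom_pack.
    rewrite <- (Atens_id HD X C), (Atens_assoc HD (I X) (I C) (pack d)). rnest.
    rewrite <- tens_comp_r by obj.
    rewrite (Atens_assoc HD (pack t) (I C) (I M)), (Atens_id HD C M). reflexivity. }
  destruct (Heq2 _ _ Hr0) as [u [Hu _]].
  assert (H1 := f_equal pack Heq1). revert H1. unfold cot1, cot2, cofree_coaction. simp. intro H1.
  exists u. split.
  - destruct (Heq2 _ e Heq1) as [u0 [_ Hu0]].
    rewrite (Hu0 (idm E)) by apply (comp_idr D HD).
    apply Hu0. rewrite (comp_assoc D HD), Hu.
    apply pack_inj. unfold r0, hopfR, adj_counit. simp.
    rewrite (Acomp_assoc HD _ (Atens (Atens Ep (I X)) (I M)) (Atens (I X) (pack d))) by obj.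
    rewrite <- (Ainterchange HD) by obj. clean.
    rewrite (tens_splitA (Atens Ep (I X)) (pack d)), cod_pack, dom_Atens, dom_pack, dom_Aid. rnest.
    rewrite <- H1.
    rewrite <- (Atens_id HD C M), <- (Atens_assoc HD (Atens Ep (I X)) (I C) (I M)).
    rewrite (Atens_assoc HD Ep (I X) (I C)), (Atens_id HD X C).
    rewrite (Acomp_assoc HD (pack e)) by obj. rewrite <- tens_comp_l by obj. rewrite HB.
    rewrite (Acomp_assoc HD (pack e)) by obj. rewrite <- tens_comp_l by obj. rewrite HT1.
    clean. reflexivity.
  - unfold hopfR. rewrite <- (comp_assoc D HD), Hu.
    apply pack_inj. unfold r0, adj_counit. simp.
    rewrite (Acomp_assoc HD _ (Atens (pack t) (I M))) by obj.
    rewrite <- tens_comp_l by obj. rewrite HTE, (Atens_assoc HD).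
    rewrite <- tens_comp_r by obj. rewrite (Hcom2 _ _ Hc). clean. reflexivity.
Qed.

End W.

Theorem mainTheorem16 (D : MonData) (HD : isStrictMon D) (C : ob D)
    (Delta : hom C (C ⊗ C)) (eps : hom C unit)
    (sigma : forall X : ob D, hom (C ⊗ X) (X ⊗ C)) :
  is_lax_central_coalgebra HD C Delta eps sigma ->
  is_cocommutative C Delta sigma ->
  cotensorable HD C Delta eps sigma ->
  VR_left_hopf HD C Delta eps sigma /\
  induced_comultiplication_is HD C Delta eps sigma /\
  induced_half_braiding_is HD C Delta eps sigma /\
  ((forall X : ob D, is_iso (sigma X)) -> VR_hopf HD C Delta eps sigma).
Proof.
  intros H1 H2 _.
  split; [exact (left_hopf HD C Delta eps sigma H1 H2)|].
  split; [exact (comult HD C Delta eps sigma H1 H2)|].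
  split; [exact (half_braiding HD C Delta eps sigma H1 H2)|].
  intro Hinv. split; [exact (left_hopf HD C Delta eps sigma H1 H2)|].
  exact (right_hopf HD C Delta eps sigma H1 H2 Hinv).
Qed.
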